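(* Let $p,q$ be distinct prime numbers and let $G=\langle a,s,t \mid sas^{-1}=a^p,\ tat^{-1}=a^q\rangle$. Then $C_G(t)=\langle t\rangle$, $C_G(s)=\langle s\rangle$, and for every integer $i\geq 0$ we have $C_G(st^i)=\langle st^i\rangle$.
   Context: For a group $G$ and $g\in G$, $C_G(g)=\{h\in G\mid gh=hg\}$ is the centraliser of $g$. *)

(* Defs.v *)
From mathcomp Require Import all_boot all_algebra.
Set Implicit Arguments.
Unset Strict Implicit.
Unset Printing Implicit Defensive.

Inductive gen := gA | gS | gT.

(* a letter is a generator together with a flag: true = inverse *)
Definition letter := (gen * bool)%type.
Definition word := seq letter.

Definition flip (x : letter) : letter := (x.1, ~~ x.2).

Definition wmul (u v : word) : word := u ++ v.
Definition winv (u : word) : word := rev (map flip u).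
Definition gword (g : gen) : word := [:: (g, false)].

Fixpoint wpow (u : word) (n : nat) : word :=
  match n with 0 => [::] | n'.+1 => u ++ wpow u n' end.

Definition wzpow (u : word) (z : int) : word :=
  match z with
  | Posz n => wpow u n
  | Negz n => wpow (winv u) n.+1
  end.

Definition relator (g : gen) (e : nat) : word :=
  [:: (g, false); (gA, false); (g, true)] ++ wpow [:: (gA, true)] e.

Inductive geq (p q : nat) : word -> word -> Prop :=
  | geq_refl u : geq p q u u
  | geq_sym u v : geq p q u v -> geq p q v u
  | geq_trans u v w : geq p q u v -> geq p q v w -> geq p q u w
  | geq_cancel u v (x : letter) : geq p q (u ++ [:: x; flip x] ++ v) (u ++ v)
  | geq_relS u v : geq p q (u ++ relator gS p ++ v) (u ++ v)
  | geq_relT u v : geq p q (u ++ relator gT q ++ v) (u ++ v).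

Definition centraliser_is_cyclic (p q : nat) (g : word) : Prop :=
  forall w : word, geq p q (wmul w g) (wmul g w) <-> exists n : int, geq p q w (wzpow g n).

(* Main.v *)
Require Import Defs.
From mathcomp Require Import all_boot all_order all_algebra zify.
From Stdlib Require Import Setoid Morphisms.
Import Order.TTheory GRing.Theory Num.Theory.
Set Implicit Arguments. Unset Strict Implicit. Unset Printing Implicit Defensive.

Lemma comm_pow (T : eqType) (h : T) (P' L : seq T) : h \notin P' ->
  L ++ h :: P' = (h :: P') ++ L -> exists j, L = flatten (nseq j (h :: P')).
Proof.
move=> hP. set Q := h :: P'.
have [n] := ubnP (size L); elim: n L => [|n IH] L // sL E.
case: L sL E => [|x L0] sL E; first by exists 0%N.
move: sL E; set L := x :: L0 => sL E.
case: (leqP (size Q) (size L)) => hs.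
- set L1 := take (size Q) L; set L2 := drop (size Q) L.
  have eL : L = L1 ++ L2 by rewrite cat_take_drop.
  have sT : size L1 = size Q by rewrite size_take_min; apply/minn_idPl.
  have /eqP := E; rewrite eL -catA eqseq_cat // => /andP [/eqP tQ /eqP E2].
  rewrite tQ in E2.
  have sL2 : size L2 < n by rewrite size_drop; move: sL hs; rewrite /Q /=; lia.
  have [j Hj] := IH L2 sL2 E2.
  exists j.+1. by rewrite tQ Hj.
- exfalso.
  have := congr1 (fun s => nth h s (size L)) E => /=.
  have hs' : size L0 < size P' by move: hs; rewrite /L /Q /=.
  rewrite nth_cat ltnn subnn nth_cat hs' /Q /= => E4.
  by move: hP; rewrite E4 mem_nth.
Qed.

Section S.
Variables p q : nat.
Local Notation Gq := (Defs.geq p q).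

Instance geq_equiv : Equivalence Gq.
Proof. split; [exact: geq_refl | exact: geq_sym | exact: geq_trans]. Qed.

Lemma geq_ctx u v x y : Gq u v -> Gq (x ++ u ++ y) (x ++ v ++ y).
Proof.
elim=> {u v} //.
- move=> *; reflexivity.
- move=> u v _ H; by symmetry.
- move=> u v w _ H1 _ H2; by transitivity (x ++ v ++ y).
- move=> u v z; have := geq_cancel p q (x++u) (v++y) z; by rewrite -!catA.
- move=> u v; have := geq_relS p q (x++u) (v++y); by rewrite -!catA.
- move=> u v; have := geq_relT p q (x++u) (v++y); by rewrite -!catA.
Qed.

Instance cat_proper : Proper (Gq ==> Gq ==> Gq) (@cat letter).
Proof.
move=> u u' Hu v v' Hv; transitivity (u' ++ v).
  exact: (geq_ctx [::] v Hu).
by have := geq_ctx u' [::] Hv; rewrite !cats0.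
Qed.

Instance cons_proper x : Proper (Gq ==> Gq) (cons x).
Proof. move=> u v H; have := geq_ctx [:: x] [::] H; by rewrite !cats0. Qed.


Hint Resolve geq_refl : core.

Lemma flipK : involutive flip. Proof. by case=> g []. Qed.

Lemma cancel1 x u : Gq (x :: flip x :: u) u.
Proof. exact: (geq_cancel p q [::] u x). Qed.

Lemma cancel1' x u : Gq (flip x :: x :: u) u.
Proof. by have := cancel1 (flip x) u; rewrite flipK. Qed.

Lemma cancelR u : Gq (u ++ winv u) [::].
Proof.
elim: u => [|x u IH] /=; first reflexivity.
rewrite /winv /= rev_cons -cats1.
have -> : u ++ rev [seq flip i | i <- u] ++ [:: flip x] = (u ++ winv u) ++ [:: flip x] by rewrite catA.
by rewrite IH /= cancel1.
Qed.

Lemma cancelL u : Gq (winv u ++ u) [::].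
Proof.
elim: u => [|x u IH] /=; first reflexivity.
rewrite /winv /= rev_cons -cats1 -catA /= -/(winv u).
by rewrite cancel1' IH.
Qed.

Lemma wpowS' u n : wpow u n.+1 = wpow u n ++ u.
Proof. elim: n => [|n IH]; first by rewrite /= cats0. by move: IH => /= IH; rewrite /= -catA -IH. Qed.

Lemma wpow1 x n : wpow [:: x] n = nseq n x.
Proof. by elim: n => //= n ->. Qed.

Definition a1 : letter := (gA, false).
Definition A (k : int) : word := wzpow [:: a1] k.

Lemma A_succ k : Gq (A (k + 1)) (a1 :: A k).
Proof.
case: k => n.
  have -> : (n%:Z + 1 = n.+1%:Z)%R by lia.
  reflexivity.
case: n => [|n].
  have -> : (Negz 0 + 1 = 0%:Z)%R by lia.
  rewrite /A /=; symmetry; exact: cancel1.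
have -> : (Negz n.+1 + 1 = Negz n)%R by lia.
rewrite /A /=. symmetry. exact: cancel1.
Qed.

Definition ai : letter := (gA, true).

Lemma A_pred k : Gq (A (k - 1)) (ai :: A k).
Proof.
case: k => [[|n]|n].
- have -> : (0%:Z - 1 = Negz 0)%R by lia. by [].
- have -> : (n.+1%:Z - 1 = n%:Z)%R by lia.
  rewrite /A /=; symmetry; exact: cancel1.
- have -> : (Negz n - 1 = Negz n.+1)%R by lia. by [].
Qed.

Lemma A0 : A 0 = [::]. Proof. by []. Qed.

Lemma A_add m n : Gq (A (m + n)) (A m ++ A n).
Proof.
elim/int_ind: m n => [|m IH|m IH] n.
- by rewrite add0r.
- have -> : (m.+1%:Z + n = (m%:Z + n) + 1)%R by lia.
  rewrite A_succ IH.
  have -> : (m.+1%:Z = m%:Z + 1)%R by lia.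
  by rewrite A_succ.
- have -> : (- m.+1%:Z + n = (- m%:Z + n) - 1)%R by lia.
  rewrite A_pred IH.
  have -> : (- m.+1%:Z = - m%:Z - 1)%R by lia.
  by rewrite A_pred.
Qed.

Lemma A_inv k u : Gq (A (- k) ++ A k ++ u) u.
Proof. by rewrite catA -A_add addNr A0. Qed.

Definition gof (b : bool) := if b then gT else gS.
Definition mn (b : bool) : nat := if b then q else p.
Definition md (b : bool) : int := (mn b)%:Z.
Definition sp b : letter := (gof b, false).
Definition sn b : letter := (gof b, true).

Lemma rel b v : Gq (relator (gof b) (mn b) ++ v) v.
Proof. case: b; [exact: (geq_relT p q [::] v) | exact: (geq_relS p q [::] v)]. Qed.

Lemma nseq_cancel m X : Gq (wpow [:: ai] m ++ wpow [:: a1] m ++ X) X.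
Proof.
elim: m => [|m IH] //.
rewrite wpowS' -catA /=.
by rewrite cancel1.
Qed.

Lemma base b u : Gq (sp b :: a1 :: u) (A (md b) ++ sp b :: u).
Proof.
transitivity (relator (gof b) (mn b) ++ (A (md b) ++ sp b :: u)); last exact: rel.
rewrite /relator -catA.
rewrite (nseq_cancel (mn b) (sp b :: u)) /=.
have -> : (gof b, true) :: (gof b, false) :: u = sn b :: flip (sn b) :: u by [].
by rewrite cancel1.
Qed.

Lemma K b k u : Gq (sp b :: A k ++ u) (A (k * md b) ++ sp b :: u).
Proof.
elim/int_ind: k u => [|k IH|k IH] u.
- by rewrite mul0r.
- change (sp b :: A k.+1 ++ u) with (sp b :: a1 :: (A k ++ u)).
  rewrite base IH catA -A_add.
  by have -> : (k.+1%:Z * md b = md b + k%:Z * md b)%R by rewrite intS mulrDl mul1r.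
- have -> : (- k.+1%:Z = - k%:Z - 1)%R by lia.
  rewrite A_pred /=.
  have H : forall X, Gq (sp b :: ai :: X) (A (- md b) ++ sp b :: X).
    move=> X; symmetry.
    have ca : Gq (a1 :: ai :: X) X by exact: cancel1 a1 X.
    transitivity (A (- md b) ++ sp b :: a1 :: ai :: X); first by rewrite ca.
    by rewrite base catA -A_add addNr.
  rewrite H IH catA -A_add.
  by have -> : ((- k%:Z - 1) * md b = - md b + - k%:Z * md b)%R by rewrite mulrBl mul1r addrC.
Qed.

Lemma K' b j u : Gq (sn b :: A (j * md b) ++ u) (A j ++ sn b :: u).
Proof.
have c1 : Gq (sp b :: sn b :: u) u by exact: cancel1 (sp b) u.
have c2 : forall X, Gq (sn b :: sp b :: X) X by move=> X; exact: cancel1 (sn b) X.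
rewrite -{1}c1 -K /=. by rewrite c2.
Qed.


Hypotheses (Hp : (1 < p)%N) (Hq : (1 < q)%N).

Lemma md_gt1 b : (1 < md b)%R.
Proof. rewrite /md /mn; case: b; lia. Qed.
Lemma md_gt0 b : (0 < md b)%R.
Proof. have := md_gt1 b; lia. Qed.
Lemma md_neq0 b : md b != 0%R.
Proof. have := md_gt1 b; lia. Qed.

Definition ent := (bool * bool * int)%type.
Definition pos b : ent := (b, false, 0%R).

Definition lpos b (k : int) (L : seq ent) : int * seq ent :=
  match L with
  | (b', true, r) :: L' => if b' == b then (k * md b + r, L')%R else (k * md b, pos b :: L)%R
  | _ => ((k * md b)%R, pos b :: L) end.

Definition lneg b (k : int) (L : seq ent) : int * seq ent :=
  let j := (k %/ md b)%Z in let r := (k %% md b)%Z in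
  match L with
  | (b', false, _) :: L' => if (b' == b) && (r == 0%R) then (j, L') else (j, (b, true, r) :: L)
  | _ => (j, (b, true, r) :: L) end.

Definition act (x : letter) (n : int * seq ent) : int * seq ent :=
  let: (k, L) := n in
  match x with
  | (gA, false) => ((k + 1)%R, L) | (gA, true) => ((k - 1)%R, L)
  | (gS, false) => lpos false k L | (gS, true) => lneg false k L
  | (gT, false) => lpos true k L | (gT, true) => lneg true k L end.

Definition actw (w : word) n := foldr act n w.
Definition nf w := actw w (0%R, [::]).
Definition embE (e : ent) : word := let: (b, i, r) := e in (gof b, i) :: A r.
Definition emb (n : int * seq ent) := A n.1 ++ flatten (map embE n.2).

Definition okE (e : ent) := let: (b, i, r) := e in
  if i then (0 <= r)%R && (r < md b)%R else r == 0%R.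
Definition okP (e e' : ent) := let: (b1, i1, r1) := e in let: (b2, i2, _) := e' in
  ~~ [&& b1 == b2, i1 != i2 & r1 == 0%R].
Fixpoint validL (L : seq ent) : bool :=
  match L with
  | [::] => true
  | e :: L' => [&& okE e, validL L' & (if L' is e' :: _ then okP e e' else true)]
  end.

Lemma emb_lpos b k L : Gq (emb (lpos b k L)) (sp b :: emb (k, L)).
Proof.
rewrite /emb /= K.
case: L => [|[[b' []] r] L'] /=; rewrite ?A0 //.
case: eqP => [->|] //=.
have -> : (gof b, true) :: A r ++ flatten [seq embE i | i <- L'] = sn b :: A r ++ flatten [seq embE i | i <- L'] by [].
have c1 : forall X, Gq (sp b :: sn b :: X) X by move=> X; exact: cancel1 (sp b) X.
by rewrite c1 catA -A_add.
Qed.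

Lemma emb_lneg b k L : validL L -> Gq (emb (lneg b k L)) (sn b :: emb (k, L)).
Proof.
move=> vL.
rewrite /emb /= [in A k](divz_eq k (md b)) A_add -catA K'.
rewrite /lneg.
case: L vL => [|[[b' []] r] L'] //= vL.
case: eqP => [->|] //=; case: eqP => [Hr|] //=; rewrite Hr.
move: vL => /and3P [/eqP -> _ _].
rewrite A0 /=.
have -> : [:: (gof b, false) & flatten [seq embE i | i <- L']] = sp b :: flatten [seq embE i | i <- L'] by [].
have c2 : forall X, Gq (sn b :: sp b :: X) X by move=> X; exact: cancel1 (sn b) X.
by rewrite c2.
Qed.

Lemma act_sp b n : act (sp b) n = lpos b n.1 n.2.
Proof. by case: b; case: n. Qed.
Lemma act_sn b n : act (sn b) n = lneg b n.1 n.2.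
Proof. by case: b; case: n. Qed.

Lemma emb_act x n : validL n.2 -> Gq (emb (act x n)) (x :: emb n).
Proof.
case: n => k L /= vL.
case: x => [[] []].
- by rewrite /emb /= A_pred.
- by rewrite /emb /= A_succ.
- exact: (emb_lneg false k vL).
- exact: (emb_lpos false k L).
- exact: (emb_lneg true k vL).
- exact: (emb_lpos true k L).
Qed.

Lemma divmod_spec b k r : (0 <= r)%R -> (r < md b)%R ->
  ((k * md b + r) %/ md b)%Z = k /\ ((k * md b + r) %% md b)%Z = r.
Proof.
move=> r0 rm; split.
- rewrite divzMDl ?md_neq0 // divz_small ?addr0 //.
  apply/andP; split => //.
- by rewrite modzMDl modz_small // r0 rm.
Qed.

Lemma divmod0 b k : ((k * md b) %/ md b)%Z = k /\ ((k * md b) %% md b)%Z = 0%R.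
Proof. have [h1 h2] := divmod_spec k (lexx 0%R) (md_gt0 b). by rewrite addr0 in h1 h2. Qed.

Lemma valid_lpos b k L : validL L -> validL (lpos b k L).2.
Proof.
case: L => [|[[b' i'] r'] L'] //= vL.
case: i' vL => vL /=.
- case: eqP => [_|nb] /=; first by case/and3P: vL.
  rewrite vL /=. apply/negP => /andP [/eqP ? _]; congruence.
- by rewrite vL /= andbF.
Qed.

Lemma mod_bounds b k : (0 <= (k %% md b)%Z)%R && ((k %% md b)%Z < md b)%R.
Proof. by rewrite modz_ge0 ?md_neq0 // ltz_pmod // md_gt0. Qed.

Lemma valid_lneg b k L : validL L -> validL (lneg b k L).2.
Proof.
rewrite /lneg.
case: L => [|[[b' i'] r'] L'] /= vL; first by rewrite mod_bounds.
case: i' vL => vL /=.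
- by rewrite mod_bounds vL /= andbF.
- case: eqP => [eb|nb] /=.
  + subst b'. case: eqP => [_|nr] /=; first by case/and3P: vL.
    rewrite mod_bounds vL /=. by apply/negP => /andP [_ /eqP].
  + rewrite mod_bounds vL /=. apply/negP => /andP [/eqP ? _]; congruence.
Qed.

Lemma valid_act x n : validL n.2 -> validL (act x n).2.
Proof.
case: n => k L /= vL.
case: x => [[] []] //=; by [apply: valid_lpos | apply: valid_lneg].
Qed.

Lemma valid_actw w n : validL n.2 -> validL (actw w n).2.
Proof. elim: w => [|x w IH] //= vn; exact/valid_act/IH. Qed.

Lemma valid_nf w : validL (nf w).2.
Proof. exact: valid_actw. Qed.

Lemma nf_emb w : Gq w (emb (nf w)).
Proof.
elim: w => [|x w IH] //=.
rewrite /nf /= emb_act; last exact: valid_nf.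
by rewrite -IH.
Qed.

Lemma lpos_lneg b k L : validL L -> lpos b (lneg b k L).1 (lneg b k L).2 = (k, L).
Proof.
move=> vL; rewrite /lneg.
have ek := divz_eq k (md b).
have dflt : lpos b (k %/ md b)%Z ((b, true, (k %% md b)%Z) :: L) = (k, L).
  by rewrite /lpos eqxx -ek.
case: L vL dflt => [|[[b' []] r'] L'] //= vL dflt.
case: eqP => [eb|] //=; subst b'. case: eqP => [er|] //=.
case/and3P: vL => /eqP r0 vL' hd.
subst r'.
have ekm : ((k %/ md b)%Z * md b = k)%R by rewrite {2}ek er addr0.
clear dflt; case: L' vL' hd => [|[[b2 i2] r2] L''] vL' hd; rewrite /lpos ?ekm //.
case: i2 hd vL' => hd vL'; rewrite ?ekm //.
case: eqP => [eb|_] //.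
by subst; rewrite /= eqxx in hd.
Qed.

Lemma lneg_lpos b k L : validL L -> lneg b (lpos b k L).1 (lpos b k L).2 = (k, L).
Proof.
move=> vL.
case: L vL => [|[[b' i'] r'] L'] vL.
- rewrite /= /lneg.
  have [-> ->] := divmod0 b k. by rewrite eqxx.
- case: i' vL => vL.
  + rewrite /lpos. case: eqP => [eb|nb].
    * subst b'. case/and3P: vL => /andP [r0 rm] vL' hd.
      rewrite /lneg /=.
      have [-> ->] := divmod_spec k r0 rm.
      case: L' vL' hd => [|[[b2 i2] r2] L''] //= vL' hd.
      case: i2 hd vL' => //= hd _.
      by rewrite eq_sym (negbTE hd).
    * rewrite /lneg /=.
      have [-> ->] := divmod0 b k. by rewrite !eqxx.
  + rewrite /lpos /lneg /=.
    have [-> ->] := divmod0 b k. by rewrite !eqxx.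
Qed.

Lemma act_flip x n : validL n.2 -> act x (act (flip x) n) = n.
Proof.
case: n => k L /= vL.
case: x => [[] []] /=.
- by rewrite addrK.
- by rewrite subrK.
- have := lneg_lpos false k vL. by case: (lpos false k L).
- have := lpos_lneg false k vL. by case: (lneg false k L).
- have := lneg_lpos true k vL. by case: (lpos true k L).
- have := lpos_lneg true k vL. by case: (lneg true k L).
Qed.

Lemma actw_ai m k L : actw (wpow [:: ai] m) (k, L) = ((k - m%:Z)%R, L).
Proof.
elim: m => [|m IH]; first by rewrite subr0.
change (actw (wpow [:: ai] m.+1) (k, L)) with (act ai (actw (wpow [:: ai] m) (k, L))).
rewrite IH /=. congr pair. lia.
Qed.

Lemma act_a1 n : act a1 n = ((n.1 + 1)%R, n.2). Proof. by case: n. Qed.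

Lemma actw_rel b n : validL n.2 -> actw (relator (gof b) (mn b)) n = n.
Proof.
case: n => k L /= vL.
rewrite /relator /actw.
change (act (sp b) (act a1 (act (sn b) (actw (wpow [:: ai] (mn b)) (k,L)))) = (k,L)).
rewrite actw_ai.
change (act (sp b) (act a1 (act (sn b) ((k - md b)%R, L))) = (k, L)).
rewrite act_sn act_a1 act_sp /=.
set J := (k %/ md b)%Z; set R := (k %% md b)%Z.
have ek : k = (J * md b + R)%R by exact: divz_eq.
have e1 : (k - md b = (J - 1) * md b + R)%R by rewrite mulrBl mul1r; lia.
have /andP [R0 Rm] := mod_bounds b k.
rewrite /lneg e1. have [-> ->] := divmod_spec (J - 1) R0 Rm.
have dflt : lpos b (J - 1 + 1)%R ((b, true, R) :: L) = (k, L) by rewrite subrK /lpos eqxx -ek.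
case: L vL dflt => [|[[b' []] r'] L'] //= vL dflt.
case: eqP => [eb|] //=; subst b'. case: eqP => [er|] //=.
case/and3P: vL => /eqP r0 vL' hd. subst r'.
have ekm : (J * md b = k)%R by rewrite [RHS]ek /R er addr0.
rewrite subrK; clear dflt; case: L' vL' hd => [|[[b2 i2] r2] L''] vL' hd; rewrite /lpos ?ekm //.
case: i2 hd vL' => hd vL'; rewrite ?ekm //.
case: eqP => [eb|_] //.
by subst b2; rewrite /= eqxx in hd.
Qed.

Lemma actw_cat u v n : actw (u ++ v) n = actw u (actw v n).
Proof. by rewrite /actw foldr_cat. Qed.

Lemma actw_geq u v : Gq u v -> forall n, validL n.2 -> actw u n = actw v n.
Proof.
elim => {u v}.
- by [].
- by move=> u v _ IH n vn; rewrite IH.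
- by move=> u v w _ IH1 _ IH2 n vn; rewrite IH1 // IH2.
- move=> u v x n vn. rewrite !actw_cat /=.
  by rewrite act_flip // valid_actw.
- move=> u v n vn.
  rewrite (actw_cat u (relator gS p ++ v)) (actw_cat (relator gS p) v) (actw_cat u v).
  change (relator gS p) with (relator (gof false) (mn false)).
  by rewrite (actw_rel false) // valid_actw.
- move=> u v n vn.
  rewrite (actw_cat u (relator gT q ++ v)) (actw_cat (relator gT q) v) (actw_cat u v).
  change (relator gT q) with (relator (gof true) (mn true)).
  by rewrite (actw_rel true) // valid_actw.
Qed.

Lemma nf_geq u v : Gq u v -> nf u = nf v.
Proof. move=> H; exact: actw_geq. Qed.

Lemma nf_cat u v : nf (u ++ v) = actw u (nf v).
Proof. exact: actw_cat. Qed.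

Definition isneg0 b (e : ent) := let: (b1, i1, r1) := e in [&& b1 == b, i1 & r1 == 0%R].
Fixpoint rmulL (b : bool) (L : seq ent) : seq ent :=
  match L with
  | [::] => [:: pos b]
  | e :: L' => if L' is _ :: _ then e :: rmulL b L'
               else (if isneg0 b e then [::] else [:: e; pos b])
  end.
Definition rmul b (n : int * seq ent) := (n.1, rmulL b n.2).

Lemma rmulL_cons2 b e e2 L : rmulL b [:: e, e2 & L] = e :: rmulL b (e2 :: L).
Proof. by []. Qed.

Lemma lpos_rmul b' b k L : lpos b' k (rmulL b L) = rmul b (lpos b' k L).
Proof.
case: L => [|[[b1 i1] r1] [|e2 L'']].
- by rewrite /rmul /=; case: b b' => [] [].
- rewrite /= /rmul /=.
  case: (r1 =P 0%R) => [->|nr]; case: b b' b1 i1 => [] [] [] [] //=; rewrite ?addr0 //; by rewrite (introF eqP nr).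
- rewrite /=; case: i1; [case: (b1 == b') |]; by [].
Qed.

Lemma lneg_rmul b' b k L : lneg b' k (rmulL b L) = rmul b (lneg b' k L).
Proof.
rewrite /lneg.
move: (k %/ md b')%Z (k %% md b')%Z => j r.
case: L => [|[[b1 i1] r1] [|e2 L'']].
- rewrite /rmul /=.
  case: (r =P 0%R) => [->|nr]; case: b b' => [] [] //=; by rewrite (introF eqP nr).
- rewrite /= /rmul /=.
  case: (r =P 0%R) => [->|nr]; case: (r1 =P 0%R) => [->|nr1];
   case: b b' b1 i1 => [] [] [] [] //=; rewrite ?(introF eqP nr) ?(introF eqP nr1) //.
- rewrite /=; case: i1; last case: (b1 == b'); by case: (r == 0%R).
Qed.

Lemma act_rmul y b n : act y (rmul b n) = rmul b (act y n).
Proof.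
case: n => k L.
case: y => [[] []] /=; rewrite ?lpos_rmul ?lneg_rmul //.
Qed.

Lemma nf_rcons w b : nf (w ++ [:: sp b]) = rmul b (nf w).
Proof.
elim: w => [|x w IH].
- rewrite /nf /= /rmul /=. by case: b; rewrite mul0r.
- by rewrite /nf /= -/(nf _) IH act_rmul.
Qed.

Definition gw (bs : seq bool) : word := map sp bs.
Definition Pe (bs : seq bool) : seq ent := map pos bs.
Definition rmulLP bs L := foldl (fun L b => rmulL b L) L bs.
Definition cprod bs : int := foldr (fun b c => (md b * c)%R) 1%R bs.

Lemma nf_catg bs w : nf (w ++ gw bs) = ((nf w).1, rmulLP bs (nf w).2).
Proof.
elim: bs w => [|b bs IH] w /=; first by rewrite cats0; case: (nf w).
have -> : w ++ sp b :: gw bs = (w ++ [:: sp b]) ++ gw bs by rewrite -catA.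
by rewrite IH nf_rcons.
Qed.

Lemma lpos_size b k L : lpos b k L = ((k * md b)%R, pos b :: L) \/ (size (lpos b k L).2).+1 = size L.
Proof.
case: L => [|[[b1 []] r1] L] /=; try by left.
by case: (b1 == b); [right|left].
Qed.

Lemma lmul_size bs k L :
  (size (actw (gw bs) (k, L)).2 <= size L + size bs)%N /\
  (size (actw (gw bs) (k, L)).2 = size L + size bs ->
   actw (gw bs) (k, L) = ((k * cprod bs)%R, Pe bs ++ L)).
Proof.
elim: bs => [|b bs [IH1 IH2]] /=.
  by rewrite addn0 mulr1; split => //.
rewrite act_sp.
move: IH1 IH2; case: (actw (gw bs) (k, L)) => k1 L1 /= IH1 IH2.
case: (lpos_size b k1 L1) => [->|H] /=.
- rewrite addnS ltnS; split => //.
  move=> /eqP; rewrite eqSS => /eqP /IH2 [-> ->].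
  by rewrite (mulrC (md b)) mulrA.
- split; first by move: IH1; rewrite -H addnS => h; apply: leqW; exact: ltnW.
  move=> E. move: IH1; rewrite -H E addnS => h; exfalso; lia.
Qed.

Lemma rmulL_rcons b M e : rmulL b (rcons M e) = if isneg0 b e then M else rcons (rcons M e) (pos b).
Proof.
elim: M => [|x M IH] //=.
case E: (rcons M e) => [|y z]; first by case: M E IH.
rewrite -E IH. by case: (isneg0 b e).
Qed.

Definition ends_pos (L : seq ent) := exists M b', L = rcons M (pos b').

Lemma isneg0_pos b b' : isneg0 b (pos b') = false.
Proof. by rewrite /= andbF. Qed.

Lemma rmulLP_pos bs L : L = [::] \/ ends_pos L -> rmulLP bs L = L ++ Pe bs.
Proof.
elim: bs L => [|b bs IH] L H /=; first by rewrite cats0.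
have -> : rmulL b L = rcons L (pos b).
  case: H => [->|[M [b' ->]]] //. by rewrite rmulL_rcons isneg0_pos.
rewrite IH; first by rewrite cat_rcons.
right. by exists L, b.
Qed.

Lemma cat_P_ends L bs : ends_pos L -> ends_pos (L ++ Pe bs).
Proof.
case/lastP: bs => [|bs b] H; first by rewrite cats0.
exists (L ++ Pe bs), b. by rewrite /Pe map_rcons rcons_cat.
Qed.

Lemma rmulLP_ends bs L : bs != [::] -> (size (rmulLP bs L) < size L)%N \/ ends_pos (rmulLP bs L).
Proof.
elim: bs L => [|b bs IH] L // _ /=.
case/lastP: L => [|M e].
- right. rewrite /= rmulLP_pos; last by right; exists [::], b.
  apply: cat_P_ends. by exists [::], b.
- rewrite rmulL_rcons. case: (isneg0 b e).
  + case: bs IH => [|b2 bs] IH /=.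
    * left. by rewrite size_rcons.
    * case: (IH M isT) => [h|h]; last by right.
      left. rewrite size_rcons. exact: ltnW.
  + right. rewrite rmulLP_pos; last by right; exists (rcons M e), b.
    apply: cat_P_ends. by exists (rcons M e), b.
Qed.

Lemma flatten_embE_P bs : flatten (map embE (Pe bs)) = gw bs.
Proof. by elim: bs => //= b bs ->. Qed.

Lemma wpow_flatten u j : wpow u j = flatten (nseq j u).
Proof. by elim: j => //= j ->. Qed.

Lemma emb_pow bs j : emb (0%R, flatten (nseq j (Pe bs))) = wpow (gw bs) j.
Proof.
rewrite /emb /= wpow_flatten.
elim: j => //= j <-. by rewrite map_cat flatten_cat flatten_embE_P.
Qed.

Lemma wzpow_pred u m : Gq (wzpow u m ++ winv u) (wzpow u (m - 1)).
Proof.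
case: m => [[|n]|n].
- have -> : (0%:Z - 1 = Negz 0)%R by lia. by rewrite /= cats0.
- have -> : (n.+1%:Z - 1 = n%:Z)%R by lia.
  change (Gq (wpow u n.+1 ++ winv u) (wpow u n)). rewrite wpowS' -catA cancelR. by rewrite cats0.
- have -> : (Negz n - 1 = Negz n.+1)%R by lia.
  change (Gq (wpow (winv u) n.+1 ++ winv u) (wpow (winv u) n.+2)). by rewrite -wpowS'.
Qed.

Lemma wzpow_comm u n : Gq (wzpow u n ++ u) (u ++ wzpow u n).
Proof.
case: n => n.
- change (Gq (wpow u n ++ u) (u ++ wpow u n)). by rewrite -wpowS'.
- change (Gq (wpow (winv u) n.+1 ++ u) (u ++ (winv u ++ wpow (winv u) n))).
  rewrite wpowS' -catA cancelL cats0.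
  by rewrite catA cancelR.
Qed.

Lemma back u w m : Gq (w ++ u) (wzpow u m) -> Gq w (wzpow u (m - 1)).
Proof.
move=> H. rewrite -wzpow_pred -H -catA cancelR. by rewrite cats0.
Qed.

Lemma cprod_ge1 bs : (1 <= cprod bs)%R.
Proof.
elim: bs => //= b bs IH. have := md_gt1 b => h. nia.
Qed.

Lemma cprod_gt1 b bs : (1 < cprod (b :: bs))%R.
Proof. have := cprod_ge1 bs; have := md_gt1 b; rewrite /=; nia. Qed.

Theorem cent bs h bs' (Hbs : bs = h :: bs') (Hprim : h \notin bs') (w : word) :
  Gq (w ++ gw bs) (gw bs ++ w) <-> exists n : int, Gq w (wzpow (gw bs) n).
Proof.
split; last first.
  case=> n H. by rewrite H wzpow_comm.
have bsn : bs != [::] by rewrite Hbs.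
have [N] := ubnP (size (nf w).2); elim: N w => [|N IH] w //= sw Hc.
set g := gw bs.
have Hc' : Gq ((w ++ g) ++ g) (g ++ (w ++ g)).
  by transitivity ((g ++ w) ++ g); [rewrite Hc | rewrite -catA].
have nfw' := nf_catg bs w.
case: (rmulLP_ends (nf w).2 bsn) => [hs|hp].
- have sw' : (size (nf (w ++ g)).2 < N)%N.
    rewrite nfw' /=. apply: leq_trans hs _. by rewrite -ltnS.
  have [m Hm] := IH (w ++ g) sw' Hc'.
  exists (m - 1)%R. exact: back.
- have hp' : ends_pos (nf (w ++ g)).2 by rewrite nfw'.
  move: (nf_geq Hc'). rewrite (nf_catg bs (w ++ g)) (nf_cat g (w ++ g)).
  have ew' := nf_emb (w ++ g).
  move: hp' ew'. case: (nf (w ++ g)) => k L' hp' ew' E.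
  rewrite /= in hp'.
  move: E; rewrite [(k, L').1]/= [(k, L').2]/= (rmulLP_pos bs); last by right.
  have [_ Hs] := lmul_size bs k L'.
  move=> E. move: (Hs). rewrite -E size_cat size_map => /(_ (erefl _)).
  case=> Ek EL.
  have k0 : k = 0%R.
    have : (k * (cprod bs - 1) == 0)%R by rewrite mulrBr mulr1 -Ek subrr.
    rewrite mulf_eq0 subr_eq0 => /orP [/eqP //|/eqP c1].
    by have := cprod_gt1 h bs'; rewrite -Hbs c1 ltxx.
  have [j Hj] : exists j, L' = flatten (nseq j (Pe bs)).
    rewrite Hbs in EL *; apply: comm_pow; last exact: EL.
    rewrite mem_map; last by move=> x y [].
    exact: Hprim.
  exists (Posz j - 1)%R. apply: back.
  rewrite ew' k0 Hj emb_pow. done.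
Qed.
End S.

Theorem lemma3p2 (p q : nat) (hp : prime p) (hq : prime q) (hpq : p != q) :
  centraliser_is_cyclic p q (gword gT) /\
  centraliser_is_cyclic p q (gword gS) /\
  (forall i : nat, centraliser_is_cyclic p q (wmul (gword gS) (wpow (gword gT) i))).
Proof.
have Hp := prime_gt1 hp; have Hq := prime_gt1 hq.
split; [|split].
- move=> w. exact: (@cent p q Hp Hq [:: true] true [::] erefl isT w).
- move=> w. exact: (@cent p q Hp Hq [:: false] false [::] erefl isT w).
- move=> i w.
  have -> : wmul (gword gS) (wpow (gword gT) i) = gw (false :: nseq i true).
    by rewrite /wmul /gw /= wpow1 map_nseq.
  apply: (@cent p q Hp Hq _ false (nseq i true) erefl _ w).
  by rewrite mem_nseq andbF.
Qed.
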